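(* Let $C$ be an independent set of the Kneser graph of flags of type $\{2,3\}$ of $\mathrm{PG}(6,q)$, let $H$ be a hyperplane and $P$ a point of $\mathrm{PG}(6,q)$. (i) Let $\mathcal{E}$ be the set of planes $E$ of $H$ for which there is a solid $S$ with $(E,S)\in C$ and $E=H\cap S$. Then $E\cap E'\neq\emptyset$ for all $E,E'\in\mathcal{E}$, i.e. $\mathcal{E}$ is an independent set of the Kneser graph of planes of $H$; hence $|\mathcal{E}|\le\begin{bmatrix}5\\2\end{bmatrix}_q$. (ii) Let $\mathcal{S}$ be the set of solids $S$ for which there is a flag $(E,S)\in C$ with $P\in S\setminus E$. Then $|\mathcal{S}|\le\begin{bmatrix}5\\2\end{bmatrix}_q$.
   Context: Dimensions are projective (planes 2, solids 3, hyperplanes 5). A flag of type $\{2,3\}$ is a pair $(E,S)$ of a plane $E$ and a solid $S$ with $E\subseteq S$; in the Kneser graph distinct flags $(E,S),(E',S')$ are adjacent iff $E\cap S'=\emptyset$ and $E'\cap S=\emptyset$. The Kneser graph of planes of $H$ has planes of $H$ as vertices, adjacent iff disjoint. $\begin{bmatrix}5\\2\end{bmatrix}_q=\frac{(q^5-1)(q^4-1)}{(q^2-1)(q-1)}$. *)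

(* Defs.v *)
(* PG(6,q) = projective geometry of the vector space F^7,
   F a finite field with q = #|F| elements. A projective subspace of
   projective dimension k is a vector subspace of dimension k+1, represented
   canonically by a square matrix A : 'M[F]_7 with <<A>>%MS = A (its row space). *)
From HB Require Import structures.
From mathcomp Require Import all_boot all_order all_algebra all_fingroup.
Set Implicit Arguments. Unset Strict Implicit. Unset Printing Implicit Defensive.
Import GRing.Theory.
Local Open Scope ring_scope.

Definition subsp (F : fieldType) (d : nat) (A : 'M[F]_7) : bool :=
  (<<A>>%MS == A) && (\rank A == d).

Definition is_point (F : fieldType) (A : 'M[F]_7) := subsp 1 A.
Definition is_plane (F : fieldType) (A : 'M[F]_7) := subsp 3 A.
Definition is_solid (F : fieldType) (A : 'M[F]_7) := subsp 4 A.
Definition is_hyperplane (F : fieldType) (A : 'M[F]_7) := subsp 6 A.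

Definition disjoint_sub (F : fieldType) (A B : 'M[F]_7) : bool :=
  (A :&: B)%MS == 0.

Definition is_flag23 (F : fieldType) (f : 'M[F]_7 * 'M[F]_7) : bool :=
  [&& is_plane f.1, is_solid f.2 & (f.1 <= f.2)%MS].

Definition flag_adj (F : fieldType) (f g : 'M[F]_7 * 'M[F]_7) : bool :=
  [&& f != g, disjoint_sub f.1 g.2 & disjoint_sub g.1 f.2].

Definition flag_indep (F : finFieldType) (C : {set 'M[F]_7 * 'M[F]_7}) : Prop :=
  (forall f, f \in C -> is_flag23 f) /\
  (forall f g, f \in C -> g \in C -> ~~ flag_adj f g).

Definition gauss52 (q : nat) : nat :=
  ((q ^ 5 - 1) * (q ^ 4 - 1)) %/ ((q ^ 2 - 1) * (q - 1)).

(* Main.v *)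
Require Import Defs.
From HB Require Import structures.
From mathcomp Require Import all_boot all_order all_algebra all_fingroup.
From mathcomp Require Import zify ring.
Set Implicit Arguments. Unset Strict Implicit. Unset Printing Implicit Defensive.
Import GRing.Theory.
Local Open Scope ring_scope.

Lemma PoszX (a b : nat) : ((a ^ b)%N : int) = (a : int) ^+ b.
Proof. by rewrite -natz natrX natz. Qed.

Lemma sub1 (a : nat) : (0 < a)%N -> ((a - 1)%N : int) = (a : int) - 1.
Proof. by move=> a0; rewrite -subzn. Qed.

Lemma subX (q a b : nat) : (0 < q)%N -> (b <= a)%N ->
  ((q ^ a - q ^ b)%N : int) = (q%:Z) ^+ a - (q%:Z) ^+ b.
Proof. by move=> q0 ba; rewrite -subzn ?leq_pexp2l // !PoszX. Qed.

Lemma arith (q : nat) : (1 < q)%N ->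
  (\prod_(i < 6) (q ^ 6 - q ^ (0 + i)))%N =
  ((q ^ 3).+1 * (gauss52 q * ((\prod_(i < 3) (q ^ 3 - q ^ (0 + i))) *
                  (\prod_(i < 3) (q ^ 6 - q ^ (3 + i))))))%N.
Proof.
move=> q1; have q0 : (0 < q)%N by lia.
have -> : gauss52 q = ((q^4+q^3+q^2+q+1)*(q^2+1))%N.
  rewrite /gauss52.
  have -> : ((q ^ 5 - 1) * (q ^ 4 - 1))%N =
            ((q ^ 2 - 1) * (q - 1) * ((q^4+q^3+q^2+q+1)*(q^2+1)))%N.
    apply/eqP; rewrite -eqz_nat; apply/eqP.
    rewrite !PoszM !sub1 ?expn_gt0 ?q0 //.
    rewrite !PoszD !PoszX; ring.
  rewrite mulKn // muln_gt0 !subn_gt0; apply/andP; split => //.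
  by rewrite -{1}(expn0 q) ltn_exp2l.
rewrite !big_ord_recl !big_ord0 /=.
apply/eqP; rewrite -eqz_nat; apply/eqP.
rewrite !PoszM !subX //.
rewrite !PoszD !PoszX /=; ring.
Qed.

Section Main.
Variable F : finFieldType.
Local Notation q := #|F|.

Lemma card_subsp n m (U : 'M[F]_(m, n)) :
  #|[set b : 'rV[F]_n | (b <= U)%MS]| = (q ^ \rank U)%N.
Proof.
have -> : [set b : 'rV[F]_n | (b <= U)%MS] =
          [set c *m row_base U | c in [set: 'rV[F]_(\rank U)]].
  apply/setP => b; rewrite inE; apply/idP/imsetP.
    rewrite -(eq_row_base U) => /submxP[c ->]; by exists c; rewrite ?inE.
  by case=> c _ ->; rewrite -(eq_row_base U) submxMl.
rewrite card_imset; last exact: row_free_inj (row_base_free U).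
by rewrite cardsT card_mx mul1n.
Qed.

Lemma card_split m1 m2 n (P : 'M[F]_(m1, n) -> 'M[F]_(m2, n) -> bool) :
  #|[set B : 'M[F]_(m1 + m2, n) | P (usubmx B) (dsubmx B)]| =
  (\sum_(b : 'M[F]_(m1, n)) #|[set B' | P b B']|)%N.
Proof.
have -> : [set B : 'M[F]_(m1 + m2, n) | P (usubmx B) (dsubmx B)] =
   [set col_mx bb.1 bb.2 | bb in [set bb : 'M[F]_(m1, n) * 'M[F]_(m2, n) | P bb.1 bb.2]].
  apply/setP => B; rewrite inE; apply/idP/imsetP.
    by move=> HP; exists (usubmx B, dsubmx B); rewrite ?inE ?vsubmxK.
  by case=> -[b1 b2]; rewrite inE /= => HP ->; rewrite col_mxKu col_mxKd.
rewrite card_imset; last by move=> [a b] [c d] /eq_col_mx [/= -> ->].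
rewrite -sum1_card.
rewrite (eq_bigr (fun b => \sum_(B' in [set B' | P b B']) 1)%N); last first.
  by move=> b _; rewrite sum1_card.
rewrite pair_big_dep /=.
by apply: eq_bigl => -[a b]; rewrite !inE.
Qed.


Lemma rank_addr1 n (A : 'M[F]_n) (b : 'rV[F]_n) :
  (\rank (A + b)%MS <= \rank A + 1)%N.
Proof.
by rewrite (leq_trans (mxrank_adds_leqif A b)) // leq_add2l rank_leq_row.
Qed.

Lemma rank_add_rows n m (A : 'M[F]_n) (B : 'M[F]_(m, n)) :
  (\rank (A + B)%MS <= \rank A + m)%N.
Proof.
by rewrite (leq_trans (mxrank_adds_leqif A B)) // leq_add2l rank_leq_row.
Qed.

Lemma card_ext n (U : 'M[F]_n) m : forall A : 'M[F]_n, (A <= U)%MS ->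
  #|[set B : 'M[F]_(m, n) | (\rank (A + B)%MS == \rank A + m)%N && (B <= U)%MS]|
  = (\prod_(i < m) (q ^ \rank U - q ^ (\rank A + i)))%N.
Proof.
elim: m => [|m IH] A sAU.
  rewrite big_ord0.
  have -> : [set B : 'M[F]_(0, n) | (\rank (A + B)%MS == \rank A + 0)%N && (B <= U)%MS]
          = setT.
    apply/setP => B; rewrite !inE flatmx0 addsmx0 addn0 eqxx sub0mx //.
  by rewrite cardsT card_mx mul0n expn0.
pose P (b : 'M[F]_(1, n)) (B' : 'M[F]_(m, n)) :=
  (\rank (A + col_mx b B')%MS == \rank A + m.+1)%N && (col_mx b B' <= U)%MS.
have -> : [set B : 'M[F]_(m.+1, n) | (\rank (A + B)%MS == \rank A + m.+1)%N && (B <= U)%MS]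
        = [set B : 'M[F]_(1 + m, n) | P (usubmx B) (dsubmx B)].
  by apply/setP => B; rewrite !inE /P vsubmxK.
rewrite (card_split P).
have Hb : forall b : 'rV[F]_n, #|[set B' | P b B']| =
   (((b <= U)%MS && ~~ (b <= A)%MS) *
     \prod_(i < m) (q ^ \rank U - q ^ (\rank A + 1 + i)))%N.
  move=> b.
  have E : forall B' : 'M[F]_(m, n), P b B' =
     [&& (b <= U)%MS, ~~ (b <= A)%MS &
      (\rank ((A + b)%MS + B')%MS == \rank (A + b)%MS + m)%N && (B' <= U)%MS].
    move=> B'; rewrite /P col_mx_sub.
    rewrite (adds_eqmx (eqmx_refl A) (eqmx_sym (addsmxE b B'))) addsmxA.
    have h1 := rank_addr1 A b.
    have h2 := rank_add_rows (A + b)%MS B'.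
    have [le e] := mxrank_leqif_sup (addsmxSl A b).
    rewrite addsmx_sub submx_refl /= in e.
    have h3 : (\rank (A + b)%MS == \rank A + 1)%N = ~~ (b <= A)%MS.
      rewrite -e; apply/eqP/idP; first by move=> ->; lia.
      by move=> /eqP ne; move: le h1 ne; lia.
    case bU : (b <= U)%MS => /=; last by rewrite !andbF.
    case bA : (b <= A)%MS => /=.
      apply/negbTE; move: h3; rewrite bA /= => /negbT h3.
      move: h2 h3; lia.
    move: h3; rewrite bA /= => /eqP h3; rewrite h3 andbC [in RHS]andbC.
    congr (_ && _); apply/eqP/eqP; lia.
  case bU : (b <= U)%MS; case bA : (b <= A)%MS => /=;
    try by (rewrite mul0n; apply/eqP; rewrite cards_eq0; apply/eqP/setP => B';
            rewrite !inE E bU ?bA).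
  have e1 : \rank (A + b)%MS = (\rank A + 1)%N.
    have [le e] := mxrank_leqif_sup (addsmxSl A b).
    rewrite addsmx_sub submx_refl bA /= in e.
    have := rank_addr1 A b; move/eqP: e; lia.
  rewrite mul1n -e1 -IH; last by rewrite addsmx_sub sAU bU.
  by apply: eq_card => B'; rewrite !inE E bU bA.
under eq_bigr => b _ do rewrite Hb.
rewrite -big_distrl /= big_ord_recl addn0.
congr (_ * _)%N; last by apply: eq_bigr => i _; rewrite addn1 addSnnS.

rewrite (eq_bigr (fun b => if (b <= U)%MS && ~~ (b <= A)%MS then 1 else 0)%N);
  last by move=> b _; case: ifP.
rewrite -big_mkcond sum1dep_card.
have -> : [set b : 'rV[F]_n | (b <= U)%MS && ~~ (b <= A)%MS] =
   [set b : 'rV[F]_n | (b <= U)%MS] :\: [set b : 'rV[F]_n | (b <= A)%MS].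
  by apply/setP => b; rewrite !inE andbC.
rewrite cardsDS ?card_subsp //.
by apply/subsetP => b; rewrite !inE => /submx_trans; apply.
Qed.

Lemma card_sum (T : finType) (A : {set T}) (p : pred T) :
  #|[set t in A | p t]| = (\sum_(t in A) p t)%N.
Proof.
rewrite -sum1_card [LHS]big_mkcond [RHS]big_mkcond /=.
by apply: eq_bigr => t _; rewrite !inE; case: (t \in A); case: (p t).
Qed.

Lemma card_part (T U : finType) (A : {set T}) (X : {set U}) (f : T -> U) :
  #|[set t in A | f t \in X]| = (\sum_(x in X) #|[set t in A | f t == x]|)%N.
Proof.
rewrite -sum1_card (partition_big f (fun x => x \in X)); last first.
  by move=> t; rewrite inE => /andP[].
apply: eq_bigr => x Xx; rewrite -sum1_card; apply: eq_bigl => t.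
rewrite !inE; case: (t \in A) => //=; by case: eqP => [->|]; rewrite ?Xx ?andbF.
Qed.

Definition e3 : 'M[F]_(3, 3 + 3) := row_mx 1%:M 0.

Definition Bs (H : 'M[F]_7) : {set 'M[F]_(3 + 3, 7)} := locked [set B : 'M[F]_(3 + 3, 7) |
   (\rank ((0%R : 'M[F]_7) + B)%MS == \rank (0%R : 'M[F]_7) + (3 + 3))%N && (B <= H)%MS].

Lemma Bs_def H : Bs H = [set B : 'M[F]_(3 + 3, 7) |
   (\rank ((0%R : 'M[F]_7) + B)%MS == \rank (0%R : 'M[F]_7) + (3 + 3))%N && (B <= H)%MS].
Proof. by rewrite /Bs -lock. Qed.

Lemma BsP H B : B \in Bs H -> row_free B /\ (B <= H)%MS.
Proof.
rewrite Bs_def inE mxrank0 add0n => /andP[/eqP r ->]; split=> //.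
by rewrite /row_free; move: r; rewrite adds0mx => ->.
Qed.

Lemma BsE H B : row_free B -> (B <= H)%MS -> B \in Bs H.
Proof. by move=> rf sBH; rewrite Bs_def inE sBH mxrank0 add0n adds0mx andbT. Qed.

Definition N0 := ((\prod_(i < 3) (q ^ 3 - q ^ (0 + i))) *
                  (\prod_(i < 3) (q ^ 6 - q ^ (3 + i))))%N.

Lemma count_e3 (H x : 'M[F]_7) : \rank H = 6 -> <<x>>%MS = x -> \rank x = 3 ->
  (x <= H)%MS -> #|[set B in Bs H | <<e3 *m B>>%MS == x]| = N0.
Proof.
move=> rH gx rx sxH.
pose Pp (b1 : 'M[F]_(3, 7)) (b2 : 'M[F]_(3, 7)) :=
  (col_mx b1 b2 \in Bs H) && (<<b1>>%MS == x).
have -> : [set B in Bs H | <<e3 *m B>>%MS == x] =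
          [set B : 'M[F]_(3 + 3, 7) | Pp (usubmx B) (dsubmx B)].
  apply/setP => B.
  have eB : e3 *m B = usubmx B.
    by rewrite -{1}(vsubmxK B) /e3 mul_row_col mul1mx mul0mx addr0.
  by rewrite [in LHS]inE [in RHS]inE /Pp vsubmxK eB.
rewrite (card_split Pp).
have gE : forall b1 : 'M[F]_(3, 7),
    (<<b1>>%MS == x) = (\rank ((0%R : 'M[F]_7) + b1)%MS == \rank (0%R : 'M[F]_7) + 3)%N && (b1 <= x)%MS.
  move=> b1; rewrite mxrank0 add0n adds0mx; apply/eqP/andP.
    move=> e; move: rx; rewrite -e genmxE => ->.
    by split=> //; rewrite genmxE.
  case=> /eqP r1 s1; rewrite -gx; apply: eq_genmx; apply/eqmxP.
  by rewrite -(mxrank_leqif_eq s1) r1 rx.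
rewrite (eq_bigr (fun b1 => (<<b1>>%MS == x) * \prod_(i < 3) (q ^ 6 - q ^ (3 + i))))%N;
  last first.
  move=> b1 _; case: eqP => [gb1|ne]; last first.
    by rewrite mul0n; apply/eqP; rewrite cards_eq0; apply/eqP/setP => b2; rewrite !inE /Pp (introF eqP ne) andbF.
  have eb : (b1 :=: x)%MS by rewrite -gb1; apply: eqmx_sym; exact: genmxE.
  rewrite mul1n; transitivity #|[set b2 : 'M[F]_(3, 7) |
     (\rank (x + b2)%MS == \rank x + 3)%N && (b2 <= H)%MS]|; last first.
    by rewrite (card_ext 3 sxH) rH rx.
  apply: eq_card => b2; rewrite !inE /Pp gb1 eqxx andbT.
  rewrite Bs_def inE col_mx_sub eb sxH /= mxrank0 add0n adds0mx.
  by rewrite -(addsmxE b1 b2) (adds_eqmx eb (eqmx_refl b2)) rx.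
rewrite -big_distrl /= /N0; congr (_ * _)%N.
transitivity #|[set b1 : 'M[F]_(3, 7) |
  (\rank ((0%R : 'M[F]_7) + b1)%MS == \rank (0%R : 'M[F]_7) + 3)%N && (b1 <= x)%MS]|;
  last by rewrite (card_ext 3 (sub0mx 7 x)) rx mxrank0.
rewrite -sum1dep_card [RHS]big_mkcond /=; apply: eq_bigr => b1 _; rewrite gE; by case: ifP.
Qed.


Lemma count_T (H x : 'M[F]_7) (T : 'M[F]_(3 + 3)) : T \in unitmx ->
  #|[set B in Bs H | <<(e3 *m T) *m B>>%MS == x]| =
  #|[set B in Bs H | <<e3 *m B>>%MS == x]|.
Proof.
move=> uT.
have fT : row_full T by rewrite row_full_unit.
have fTi : row_full (invmx T) by rewrite row_full_unit unitmx_inv.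
rewrite -(card_imset _ (can_inj (mulKmx uT))).
apply: eq_card => B; apply/imsetP/idP.
  case=> B0; rewrite !inE => /andP[/BsP[rf sBH] e] ->.
  rewrite mulmxA e andbT; apply: BsE.
    by rewrite /row_free (eqmxMfull B0 fT).
  exact: submx_trans (submxMl _ _) sBH.
rewrite !inE => /andP[/BsP[rf sBH] e].
exists (invmx T *m B); last by rewrite mulKVmx.
rewrite inE -mulmxA mulKVmx // e andbT; apply: BsE.
  by rewrite /row_free (eqmxMfull B fTi).
exact: submx_trans (submxMl _ _) sBH.
Qed.


Lemma main_ineq (H : 'M[F]_7) (X : {set 'M[F]_7}) (K : {set 'M[F]_(3, 3 + 3)}) :
  \rank H = 6 ->
  (forall x, x \in X -> [/\ <<x>>%MS = x, \rank x = 3 & (x <= H)%MS]) ->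
  (forall x y, x \in X -> y \in X -> (x :&: y)%MS != 0) ->
  (forall k, k \in K -> exists2 T, T \in unitmx & k = e3 *m T) ->
  (forall k k', k \in K -> k' \in K -> k != k' -> col_mx k k' \in unitmx) ->
  (#|K| * (#|X| * N0) <= #|Bs H|)%N.
Proof.
move=> rH HX HXX HK1 HK2.
have step1 : (\sum_(B in Bs H) #|[set k in K | <<k *m B>>%MS \in X]| <= #|Bs H|)%N.
  rewrite -sum1_card; apply: leq_sum => B BB.
  apply/card_le1_eqP => k k'; rewrite !inE => /andP[Kk Xk] /andP[Kk' Xk'].
  apply/eqP; apply/negPn/negP => nkk.
  have := HXX _ _ Xk Xk'; apply/negP; rewrite negbK.
  have [rfB _] := BsP BB.
  have u : col_mx k k' \in unitmx by apply: HK2 => //; rewrite eq_sym.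
  have r6 : \rank (col_mx k k' *m B) = 6.
    by rewrite (mxrankMfree _ rfB) (mxrank_unit u).
  rewrite mul_col_mx -(addsmxE (k *m B) (k' *m B)) in r6.
  have := mxrank_sum_cap (k *m B) (k' *m B); rewrite r6.
  have := rank_leq_row (k *m B); have := rank_leq_row (k' *m B).
  move=> h1 h2 h3.
  have r0 : \rank (k *m B :&: k' *m B)%MS = 0 by move: h1 h2 h3; lia.
  rewrite -mxrank_eq0 (cap_eqmx (genmxE _) (genmxE _)) r0 //.
have step2 : (\sum_(B in Bs H) #|[set k in K | <<k *m B>>%MS \in X]|)%N =
             (#|K| * (#|X| * N0))%N.
  rewrite (eq_bigr _ (fun B _ => card_sum K (fun k => <<k *m B>>%MS \in X))).
  rewrite exchange_big /=.
  rewrite -sum_nat_const; apply: eq_bigr => k Kk.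
  rewrite -(card_sum (Bs H) (fun B => <<k *m B>>%MS \in X)).
  rewrite (card_part (Bs H) X (fun B => <<k *m B>>%MS)).
  rewrite -sum_nat_const; apply: eq_bigr => x Xx.
  have [T uT ->] := HK1 _ Kk.
  have [gx rx sxH] := HX _ Xx.
  by rewrite count_T // count_e3.
by rewrite -step2.
Qed.


Lemma size_rVpoly d (v : 'rV[F]_d) : (size (rVpoly v) <= d)%N.
Proof. exact: size_poly. Qed.

Lemma exists_cubic : exists p : {poly F}, [/\ p \is monic, size p = 4%N & forall a, ~~ root p a].
Proof.
pose P (v : 'rV[F]_3) : {poly F} := 'X^3 + rVpoly v.
have szP v : size (P v) = 4%N.
  by rewrite /P size_polyDl size_polyXn // ltnS size_rVpoly.
have mP v : P v \is monic.
  by rewrite monicE /P lead_coefDl ?lead_coefXn // size_polyXn ltnS size_rVpoly.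
suff [v Hv] : exists v, forall a, ~~ root (P v) a by exists (P v).
pose Phi0 (aw : F * 'rV[F]_2) : {poly F} := ('X - aw.1%:P) * ('X^2 + rVpoly aw.2).
pose Phi (aw : F * 'rV[F]_2) : 'rV[F]_4 := poly_rV (Phi0 aw).
have ltPhi : (#|[set Phi aw | aw in [set: F * 'rV[F]_2]]| < q ^ 3)%N.
  have le := leq_imset_card Phi [set: F * 'rV[F]_2].
  rewrite cardsT card_prod card_mx mul1n -expnS in le.
  rewrite ltn_neqAle le andbT; apply/negP => /eqP e.
  have : #|[set Phi aw | aw in [set: F * 'rV[F]_2]]| == #|[set: F * 'rV[F]_2]|.
    by rewrite e cardsT card_prod card_mx mul1n -expnS.
  move/imset_injP => inj.
  have h : Phi (0, poly_rV (- 'X)) = Phi (1, 0).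
    rewrite /Phi /Phi0 /= linear0 poly_rV_K; last by rewrite size_polyN size_polyX.
    congr poly_rV; rewrite ?polyC0 ?polyC1 ?subr0 ?addr0.
    have -> : rVpoly (0 : 'rV[F]_2) = 0 by apply: linear0.
    by rewrite addr0; ring.
  have := inj _ _ (in_setT _) (in_setT _) h; case => /eqP; by rewrite eq_sym oner_eq0.
suff : [exists v : 'rV[F]_3, [forall a, ~~ root (P v) a]].
  by case/existsP => v /forallP Hv; exists v.
apply: contraT => /existsPn Hn.
have sub : [set (poly_rV (P v) : 'rV[F]_4) | v in [set: 'rV[F]_3]] \subset [set Phi aw | aw in [set: F * 'rV[F]_2]].
  apply/subsetP => _ /imsetP[v _ ->].
  have [a ra] : exists a, root (P v) a.
    by have /forallPn[a /negPn ra] := Hn v; exists a.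
  have [g eg] := factor_theorem _ _ ra.
  have g0 : g != 0 by apply: contra_eqN eg => /eqP->; rewrite mul0r -size_poly_eq0 szP.
  have szg : size g = 3.
    have := szP v; rewrite eg size_Mmonic ?monicXsubC // size_XsubC addn2 /=.
    by case.
  have mg : g \is monic by rewrite -(monicMr g (monicXsubC a)) -eg.
  apply/imsetP; exists (a, poly_rV (g - 'X^2)); first by rewrite inE.
  rewrite /Phi /Phi0 /=; congr poly_rV; rewrite poly_rV_K; last first.
    apply/leq_sizeP => j j2; rewrite coefB coefXn.
    case: (ltngtP j 2) => [//|j3|->]; first by lia.
      by rewrite nth_default ?szg // subr0.
    by move: mg; rewrite monicE lead_coefE szg => /eqP ->; rewrite subrr.
  by rewrite eg; ring.
have := subset_leq_card sub.
rewrite card_imset; last first.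
  move=> v w /= e; have : rVpoly (poly_rV (P v) : 'rV[F]_4) = rVpoly (poly_rV (P w) : 'rV[F]_4) by rewrite e.
  by rewrite !poly_rV_K ?szP // => /addrI /(can_inj rVpolyK).
rewrite cardsT card_mx mul1n => le; move: (leq_ltn_trans le ltPhi); by rewrite ltnn.
Qed.


Lemma horner_unit (C : 'M[F]_3) : (forall a, ~~ root (char_poly C) a) ->
  forall f : {poly F}, f != 0 -> (size f <= 3)%N -> horner_mx C f \in unitmx.
Proof.
move=> nr f f0 szf.
set p := char_poly C.
have szp : size p = 4%N by rewrite size_char_poly.
have p0 : p != 0 by rewrite -size_poly_eq0 szp.
have cop : coprimep p f.
  rewrite /coprimep; set g := gcdp p f.
  have g0 : g != 0 by rewrite gcdp_eq0 negb_and p0.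
  have szg : (size g <= 3)%N by apply: leq_trans szf; apply: dvdp_leq f0 (dvdp_gcdr p f).
  have : (0 < size g)%N by rewrite size_poly_gt0.
  case: (ltngtP (size g) 1) => // g1 _.
  have [r rr] : {r | root p r}.
    by apply: (reducible_cubic_root (q := g)); rewrite ?szp ?g1 ?dvdp_gcdl //= ltnS.
  by move: (nr r); rewrite rr.
have [[u v] /= e] := Bezout_eq1_coprimepP _ _ cop.
have : horner_mx C v * horner_mx C f = 1.
  rewrite -[RHS](rmorph1 (horner_mx C)) -e rmorphD !rmorphM /p.
  have CH : horner_mx C (char_poly C) = 0 := Cayley_Hamilton C.
  rewrite /= CH mulr0 add0r //.
by rewrite -mulmxE => /mulmx1_unit [].
Qed.


Lemma fieldS : exists S : {set 'M[F]_3}, #|S| = (q ^ 3)%N /\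
  (forall M M', M \in S -> M' \in S -> M != M' -> (M - M') \in unitmx).
Proof.
have [p [mp szp nr]] := exists_cubic.
have := companionmxK mp; move: (companionmx p); rewrite szp /= => C eC.
have nrC : forall a, ~~ root (char_poly C) a by move=> a; rewrite eC.
pose h (v : 'rV[F]_3) := horner_mx C (rVpoly v).
have hB v w : h v - h w = h (v - w) by rewrite /h linearB /= rmorphB.
have hu v : v != 0 -> h v \in unitmx.
  move=> v0; apply: horner_unit => //; last exact: size_rVpoly.
  by apply: contra v0 => /eqP e; rewrite -(rVpolyK v) e linear0.
have hinj : injective h.
  move=> v w e; apply/eqP; rewrite -subr_eq0; apply/negPn/negP => nz.
  have := hu _ nz; rewrite -hB e subrr unitmxE det0 unitr0.
  done.
exists [set h v | v in [set: 'rV[F]_3]]; split.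
  by rewrite card_imset // cardsT card_mx mul1n.
move=> _ _ /imsetP[v _ ->] /imsetP[w _ ->] nvw.
rewrite hB; apply: hu; rewrite subr_eq0; by apply: contra nvw => /eqP->.
Qed.



Lemma swap_unit : (block_mx 0 1%:M 1%:M 0 : 'M[F]_(3 + 3)) \in unitmx.
Proof.
have : (block_mx 0 1%:M 1%:M 0 : 'M[F]_(3 + 3)) *m block_mx 0 1%:M 1%:M 0 = 1%:M.
  by rewrite mulmx_block !mulmx0 !mul0mx !mulmx1 add0r !addr0 -scalar_mx_block.
by case/mulmx1_unit.
Qed.

Lemma col_swap (k k' : 'M[F]_(3, 3 + 3)) : col_mx k k' \in unitmx -> col_mx k' k \in unitmx.
Proof.
move=> u.
have -> : col_mx k' k = block_mx 0 1%:M 1%:M 0 *m col_mx k k'.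
  by rewrite mul_block_col !mul0mx !mul1mx add0r addr0.
by rewrite unitmx_mul swap_unit.
Qed.

Lemma ublock_unit (M N : 'M[F]_3) : N \in unitmx -> (block_mx 1%:M M 0 N : 'M[F]_(3 + 3)) \in unitmx.
Proof. by move=> uN; rewrite unitmxE det_ublock det1 mul1r -unitmxE. Qed.

Lemma spread : exists K : {set 'M[F]_(3, 3 + 3)}, [/\ #|K| = (q ^ 3).+1,
  (forall k, k \in K -> exists2 T, T \in unitmx & k = e3 *m T) &
  (forall k k', k \in K -> k' \in K -> k != k' -> col_mx k k' \in unitmx)].
Proof.
have [S [cS HS]] := fieldS.
pose f (M : 'M[F]_3) : 'M[F]_(3, 3 + 3) := row_mx 1%:M M.
pose k0 : 'M[F]_(3, 3 + 3) := row_mx 0 1%:M.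
have finj : injective f by move=> M M' /eq_row_mx [].
have k0f M : k0 != f M.
  apply/eqP => /eq_row_mx [/matrixP /(_ 0 0)]; rewrite !mxE /=.
  by move/eqP; rewrite eq_sym oner_eq0.
have u_f_k0 M : col_mx (f M) k0 \in unitmx.
  by rewrite -block_mxEv ublock_unit ?unitmx1.
exists (k0 |: [set f M | M in S]); split.
- rewrite cardsU1 card_imset // cS.
  suff -> : k0 \notin [set f M | M in S] by [].
  apply/negP => /imsetP [M _ e]; by move: (k0f M); rewrite e eqxx.
- move=> k; rewrite !inE => /orP [/eqP -> | /imsetP [M _ ->]].
    exists (block_mx 0 1%:M 1%:M 0); first exact: swap_unit.
    by rewrite /e3 mul_row_block !mul1mx !mul0mx !addr0.
  exists (block_mx 1%:M M 0 1%:M); first by rewrite ublock_unit ?unitmx1.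
  by rewrite /e3 mul_row_block !mul1mx !mul0mx !addr0.
- move=> k k'; rewrite !inE => /orP [/eqP -> | /imsetP [M SM ->]] /orP [/eqP -> | /imsetP [M' SM' ->]].
  + by rewrite eqxx.
  + by move=> _; apply: col_swap.
  + by move=> _; apply: u_f_k0.
  move=> ne; have nMM : M != M' by apply: contra ne => /eqP ->.
  have uN : M' - M \in unitmx by apply: HS => //; rewrite eq_sym.
  have -> : col_mx (f M) (f M') = block_mx 1%:M 0 1%:M 1%:M *m block_mx 1%:M M 0 (M' - M).
    rewrite mulmx_block !mul1mx !mul0mx !addr0 addrC subrK.
    by rewrite block_mxEv.
  rewrite unitmx_mul ublock_unit // andbT.
  by rewrite unitmxE det_lblock !det1 mul1r unitr1.
Qed.


Lemma N0_gt0 : (0 < N0)%N.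
Proof.
have q1 : (1 < q)%N := card_finNzRing_gt1 F.
rewrite /N0 muln_gt0; apply/andP; split; apply: prodn_gt0 => i;
  rewrite subn_gt0 ltn_exp2l //; have := ltn_ord i; lia.
Qed.

Lemma Lbound (H : 'M[F]_7) (X : {set 'M[F]_7}) :
  \rank H = 6 ->
  (forall x, x \in X -> [/\ <<x>>%MS = x, \rank x = 3 & (x <= H)%MS]) ->
  (forall x y, x \in X -> y \in X -> (x :&: y)%MS != 0) ->
  (#|X| <= gauss52 q)%N.
Proof.
move=> rH HX HXX.
have [K [cK HK1 HK2]] := spread.
have := main_ineq rH HX HXX HK1 HK2.
rewrite Bs_def (card_ext 6 (sub0mx 7 H)) rH mxrank0 arith ?card_finNzRing_gt1 // cK.
rewrite leq_pmul2l // leq_pmul2r //; exact: N0_gt0.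
Qed.

End Main.

Lemma subspP (F : fieldType) d (A : 'M[F]_7) : subsp d A -> <<A>>%MS = A /\ \rank A = d.
Proof. by case/andP => /eqP -> /eqP ->. Qed.

Lemma planeP (F : fieldType) (A : 'M[F]_7) : is_plane A -> <<A>>%MS = A /\ \rank A = 3%N.
Proof. exact: subspP. Qed.
Lemma solidP (F : fieldType) (A : 'M[F]_7) : is_solid A -> <<A>>%MS = A /\ \rank A = 4%N.
Proof. exact: subspP. Qed.
Lemma pointP (F : fieldType) (A : 'M[F]_7) : is_point A -> <<A>>%MS = A /\ \rank A = 1%N.
Proof. exact: subspP. Qed.
Lemma hypP (F : fieldType) (A : 'M[F]_7) : is_hyperplane A -> <<A>>%MS = A /\ \rank A = 6%N.
Proof. exact: subspP. Qed.

Lemma le0 (F : fieldType) (A : 'M[F]_7) : (A <= (0 : 'M[F]_7))%MS -> A == 0.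
Proof. by rewrite submx0. Qed.

Lemma disjE (F : fieldType) (H E S E' S' : 'M[F]_7) :
  (E == H :&: S)%MS -> (E' == H :&: S')%MS -> (E :&: E')%MS == 0 -> (E :&: S')%MS == 0.
Proof.
move=> /eqmxP eE /eqmxP eE' dis; apply: le0.
rewrite -submx0 in dis; apply: submx_trans dis.
rewrite sub_capmx capmxSl /= eE' sub_capmx capmxSr andbT.
apply: submx_trans (capmxSl _ _) _; rewrite eE; exact: capmxSl.
Qed.

Lemma key_disj (F : fieldType) (P E S S' H' : 'M[F]_7) :
  \rank P = 1%N -> (P <= S)%MS -> (P <= S')%MS -> ~~ (P <= E)%MS -> (E <= S)%MS ->
  \rank H' = 6%N -> ((H' :&: S) :&: (H' :&: S'))%MS == 0 -> (E :&: S')%MS == 0.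
Proof.
move=> rP PS PS' PE ES rH dis.
have c0 : \rank ((S :&: S') :&: H')%MS = 0%N.
  apply/eqP; rewrite mxrank_eq0 -submx0; rewrite -submx0 in dis.
  apply: submx_trans dis; rewrite !sub_capmx !capmxSr /=.
  rewrite (submx_trans (capmxSl _ _) (capmxSl _ _)).
  by rewrite (submx_trans (capmxSl _ _) (capmxSr _ _)).
have r1 : (\rank (S :&: S')%MS <= 1)%N.
  have := mxrank_sum_cap (S :&: S')%MS H'; rewrite c0 rH.
  have := rank_leq_col ((S :&: S') + H')%MS; lia.
have PSS : (P <= S :&: S')%MS by rewrite sub_capmx PS PS'.
have ePSS : (P == S :&: S')%MS.
  by rewrite -(mxrank_leqif_eq PSS); apply/eqP; have := mxrankS PSS; lia.
have EP0 : (E :&: P)%MS == 0.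
  rewrite -mxrank_eq0; apply/eqP.
  have := mxrankS (capmxSr E P); rewrite rP => h.
  have : (\rank (E :&: P)%MS != 1)%N.
    apply/negP => /eqP h1.
    have : (E :&: P == P)%MS by rewrite -(mxrank_leqif_eq (capmxSr E P)) h1 rP.
    move=> /eqmxP e; apply: (negP PE); rewrite -e; exact: capmxSl.
  lia.
apply: le0; rewrite -submx0 in EP0; apply: submx_trans EP0.
rewrite sub_capmx capmxSl /= (eqmxP ePSS).
by rewrite sub_capmx capmxSr andbT (submx_trans (capmxSl _ _) ES).
Qed.

Theorem lemma3p1 (F : finFieldType) (C : {set 'M[F]_7 * 'M[F]_7})
    (H P : 'M[F]_7) :
  flag_indep C -> is_hyperplane H -> is_point P ->
  let calE := [set E : 'M[F]_7 | is_plane E &&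
                 [exists S : 'M[F]_7, ((E, S) \in C) && (E == H :&: S)%MS]] in
  let calS := [set S : 'M[F]_7 | [exists E : 'M[F]_7,
                 [&& (E, S) \in C, (P <= S)%MS & ~~ (P <= E)%MS]]] in
  ((forall E E', E \in calE -> E' \in calE -> ~~ disjoint_sub E E') /\
   (#|calE| <= gauss52 #|F|)%N) /\
  (#|calS| <= gauss52 #|F|)%N.
Proof.
move=> [Cflag Cind] hH hP calE calS.
have [gH rH] := hypP hH; have [gP rP] := pointP hP.
have partI : forall E E', E \in calE -> E' \in calE -> ~~ disjoint_sub E E'.
  move=> E E'; rewrite /calE !inE.
  move=> /andP[pE /existsP[S /andP[ES eE]]] /andP[pE' /existsP[S' /andP[ES' eE']]].
  apply/negP => dis.
  have := Cind _ _ ES ES'; apply/negP; rewrite negbK /flag_adj /=.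
  rewrite /disjoint_sub in dis *.
  rewrite (disjE eE eE' dis) (disjE eE' eE) ?andbT; last by rewrite capmxC.
  apply/negP => /eqP [e1 e2]; subst E' S'.
  have [_ r3] := planeP pE.
  have : (E <= (0 : 'M[F]_7))%MS.
    by rewrite -submx0 in dis; apply: submx_trans dis; rewrite sub_capmx submx_refl.
  by rewrite submx0 -mxrank_eq0 r3.
split; [split|].
- exact: partI.
- apply: (Lbound rH).
  + move=> x; rewrite /calE inE => /andP[px /existsP[S /andP[_ ex]]].
    have [gx rx] := planeP px; split => //.
    by rewrite (eqmxP ex) capmxSl.
  + by move=> x y Ex Ey; have := partI _ _ Ex Ey; rewrite /disjoint_sub.
pose H' := (P^C)%MS.
have rH' : \rank H' = 6%N by rewrite mxrank_compl rP.
have HP0 : (H' :&: P)%MS = 0 by rewrite capmxC capmx_compl.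
have full : forall S : 'M[F]_7, (P <= S)%MS -> \rank (H' + S)%MS = 7%N.
  move=> S PS; apply/eqP; rewrite eqn_leq rank_leq_col /=.
  have hf : \rank (P + P^C)%MS = 7%N by apply/eqP; exact: addsmx_compl_full.
  apply: (@leq_trans (\rank (P + P^C)%MS)); first by rewrite hf.
  apply: mxrankS; rewrite addsmx_sub addsmxSl andbT.
  exact: submx_trans PS (addsmxSr _ _).
have facts : forall S, S \in calS -> exists E, [/\ (E, S) \in C, (P <= S)%MS && ~~ (P <= E)%MS,
    is_plane E, is_solid S & (E <= S)%MS].
  move=> S; rewrite /calS inE => /existsP[E /and3P[ES PS PE]].
  have /and3P[pE sS ESs] := Cflag _ ES.
  by exists E; rewrite PS PE.
have r3 : forall S, S \in calS -> \rank (H' :&: S)%MS = 3%N.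
  move=> S /facts[E [_ /andP[PS _] _ sS _]]; have [_ r4] := solidP sS.
  have := mxrank_sum_cap H' S; rewrite full // rH' r4; lia.
have eS : forall S, S \in calS -> S = <<(H' :&: S + P)%MS>>%MS.
  move=> S SS; have [E [_ /andP[PS _] _ sS _]] := facts _ SS; have [gS r4] := solidP sS.
  rewrite -{1}gS; apply: eq_genmx; apply: eqmx_sym; apply/eqmxP.
  have sub : ((H' :&: S) + P <= S)%MS by rewrite addsmx_sub capmxSr PS.
  rewrite -(mxrank_leqif_eq sub) r4.
  have := mxrank_sum_cap (H' :&: S)%MS P.
  have -> : \rank ((H' :&: S) :&: P)%MS = 0%N.
    apply/eqP; rewrite mxrank_eq0 -submx0 -HP0 sub_capmx capmxSr andbT.
    exact: submx_trans (capmxSl _ _) (capmxSl _ _).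
  by rewrite r3 // rP => h; apply/eqP; lia.
pose phi (S : 'M[F]_7) := <<H' :&: S>>%MS.
have inj : {in calS &, injective phi}.
  move=> S S' SS SS' e; rewrite (eS _ SS) (eS _ SS'); apply: eq_genmx.
  apply: adds_eqmx (eqmx_refl P); apply/eqmxP; apply/genmxP; exact: e.
rewrite -(card_in_imset inj).
apply: (Lbound rH').
- move=> _ /imsetP[S SS ->]; split.
  + exact: genmx_id.
  + by rewrite /phi genmxE r3.
  + by rewrite /phi genmxE capmxSl.
- move=> _ _ /imsetP[S SS ->] /imsetP[S' SS' ->]; apply/negP => dis.
  have [E [ES /andP[PS PE] pE sS ESs]] := facts _ SS.
  have [E' [ES' /andP[PS' PE'] pE' sS' ESs']] := facts _ SS'.
  have dis' : ((H' :&: S) :&: (H' :&: S'))%MS == 0.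
    by rewrite -mxrank_eq0 -(cap_eqmx (genmxE _) (genmxE _)) mxrank_eq0.
  have := Cind _ _ ES ES'; apply/negP; rewrite negbK /flag_adj /= /disjoint_sub.
  apply/and3P; split; first last.
  - by apply: (key_disj rP PS' PS PE' ESs' rH'); rewrite capmxC.
  - exact: (key_disj rP PS PS' PE ESs rH' dis').
  apply/negP => /eqP [e1 e2]; subst E' S'.
  move: dis'; rewrite -submx0 => d.
  have : (H' :&: S <= (0 : 'M[F]_7))%MS.
    by apply: submx_trans d; rewrite sub_capmx submx_refl.
  by rewrite submx0 -mxrank_eq0 r3.
Qed.
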